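(* Let $k\ge3$. Then $$J_{-1}E\equiv \beta\, L(-2)^2E \pmod{C_2(V_L^+)},\qquad \beta=\frac{64k^2-16k-18}{(4k-1)(4k-9)}.$$
   Context: $L=\mathbb{Z}\alpha$, $\langle\alpha,\alpha\rangle=2k$; $V_L=M(1)\otimes\mathbb{C}[L]$ the lattice VOA with conformal vector $\omega=\frac1{4k}\alpha(-1)^2\mathbf1$, $L(n)=\omega_{n+1}$; $V_L^+$ the fixed points of the involution $\theta$ lifted from $-1$ on $L$; $E=e^{\alpha}+e^{-\alpha}$; $J=\frac{1}{4k^2}\alpha(-1)^4\mathbf1-\frac1k\alpha(-3)\alpha(-1)\mathbf1+\frac{3}{4k}\alpha(-2)^2\mathbf1$ and $J_{-1}$ is its $(-1)$-mode. $C_2(V)$ is the span of $\{v_{-2}u:u,v\in V\}$. *)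

(* Defs.v *)
(* lattice VOA V_L, L = Z alpha, <alpha,alpha> = 2k,
   built concretely on the basis  e^{m alpha} (x) prod_i alpha(-(i+1))^{l(i)},
   with vertex operators defined by the FLM formulas (trivial cocycle). *)
From HB Require Import structures.
From mathcomp Require Import all_boot all_order all_algebra.
From mathcomp Require Import finmap multiset.
From mathcomp.multinomials Require Import monalg.

Set Implicit Arguments.
Unset Strict Implicit.
Unset Printing Implicit Defensive.

Import Order.TTheory GRing.Theory Num.Theory.
Local Open Scope ring_scope.

Section LatticeVOA.
Variable C : numClosedFieldType.   (* the complex numbers (abstractly) *)
Variable k : nat.                   (* <alpha,alpha> = 2k *)

(* basis index: (m, l) stands for  e^{m alpha} (x) prod_i alpha(-(i+1))^(l i) *)
Definition key := (int * {mset nat}%mset)%type.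
Definition V := {malg C[key]}.

Definition lext (f : key -> V) (v : V) : V := \sum_(x <- msupp v) v@_x *: f x.

(* Heisenberg operator alpha(n) on basis vectors:
   alpha(-(p+1)) = multiplication, alpha(0) = <alpha, m alpha> = 2km,
   alpha(p+1) = 2k(p+1) d/d alpha(-(p+1)). *)
Definition hb (n : int) (x : key) : V :=
  match n with
  | Posz 0 => ((2 * k)%:R * x.1%:~R) *: << x >>
  | Posz p.+1 => ((2 * k * p.+1 * x.2 p)%N)%:R *: << (x.1, msetB x.2 (msetn 1 p)) >>
  | Negz p => << (x.1, msetD (msetn 1 p) x.2) >>
  end.

Definition alpha (n : int) : V -> V := lext (hb n).

Definition vac : V := << ((0:int), (mset0 : {mset nat}%mset)) >>.
Definition eb (m : int) : V := << (m, (mset0 : {mset nat}%mset)) >>.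

Definition wtl (m : int) (l : seq nat) : int :=
  (\sum_(i <- l) i.+1)%N%:Z + (k%:Z * m * m)%R.
Definition wt (x : key) : int := wtl x.1 x.2.

(* coefficients of z^s in E^-(-b alpha, z) = exp(sum_{n>0} b alpha(-n) z^n / n)
   and of z^{-p} in E^+(-b alpha, z) = exp(- sum_{n>0} b alpha(n) z^{-n} / n),
   via  s S_s = sum_{n=1}^s b alpha(-n) S_{s-n}. *)
Fixpoint Sseq (b : int) (s : nat) : seq (V -> V) :=
  match s with
  | 0%N => [:: id]
  | s'.+1 => let L := Sseq b s' in
      rcons L (fun v => (s'.+1%:R)^-1 *:
        \sum_(n < s'.+1) (b%:~R *: alpha (Negz n) (nth id L (s' - n) v)))
  end.
Definition Sop (b : int) (s : nat) : V -> V := nth id (Sseq b s) s.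

Fixpoint Tseq (b : int) (p : nat) : seq (V -> V) :=
  match p with
  | 0%N => [:: id]
  | p'.+1 => let L := Tseq b p' in
      rcons L (fun v => (p'.+1%:R)^-1 *:
        \sum_(n < p'.+1) ((- b)%:~R *: alpha (Posz n.+1) (nth id L (p' - n) v)))
  end.
Definition Top (b : int) (p : nat) : V -> V := nth id (Tseq b p) p.

(* (e^{b alpha})_q applied to the basis vector y, from
   Y(e^beta, z) = E^-(-beta,z) E^+(-beta,z) e_beta z^beta (trivial cocycle):
   coefficient of z^{-q-1}. *)
Definition emode (b : int) (q : int) (y : key) : V :=
  let e := (2 * k%:Z * b * y.1)%R in
  \sum_(p < (\sum_(i <- y.2) i.+1).+1)
     let s := (p%:Z - e - q - 1)%R in
     if (0 <= s)%R then Sop b (absz s) (Top b p << (b + y.1, y.2) >>) else 0.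

(* modes of  alpha(-(i1+1)) ... alpha(-(ir+1)) e^{b alpha}  on basis vectors,
   by the iterate (Borcherds) formula with a = alpha(-1)1, n = i+1:
   (a_{-n} w)_q = sum_{j>=0} C(n+j-1,j) (a_{-n-j} w_{q+j} - (-1)^n w_{q-n-j} a_j);
   the sums are truncated at bounds beyond which all terms vanish
   (w_m u = 0 for m >= wt w + wt u;  a_j u = 0 for j > wt of the Fock part of u). *)
Fixpoint lmode (b : int) (l : seq nat) (q : int) (y : key) {struct l} : V :=
  match l with
  | [::] => emode b q y
  | i :: l' =>
      let n := i.+1 in
      \sum_(j < absz (wtl b l' + wt y - q)%R)
          ('C(n + j - 1, j))%:R *: alpha (- (n + j)%:Z) (lmode b l' (q + j%:Z) y)
      - (-1) ^+ n *:
        \sum_(j < (\sum_(t <- y.2) t.+1).+1)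
          ('C(n + j - 1, j))%:R *: lext (lmode b l' (q - n%:Z - j%:Z)) (hb j y)
  end.

(* v_q u, with Y(v,z) = sum_q v_q z^{-q-1} *)
Definition mode (v : V) (q : int) (u : V) : V :=
  lext (fun x => lext (lmode x.1 (enum_mset x.2) q) u) v.

(* the involution theta lifted from -1 on L *)
Definition theta : V -> V :=
  lext (fun x => (-1) ^+ (size (enum_mset x.2)) *: << (- x.1, x.2) >>).
Definition Vplus (v : V) : Prop := theta v = v.

Definition C2plus (x : V) : Prop :=
  exists (n : nat) (c : 'I_n -> C) (u v : 'I_n -> V),
    (forall i, Vplus (u i) /\ Vplus (v i)) /\
    x = \sum_(i < n) c i *: mode (v i) (-2) (u i).

Definition omega : V := (4 * k)%:R^-1 *: alpha (-1) (alpha (-1) vac).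
Definition Lm2 (v : V) : V := mode omega (-1) v.

Definition Evec : V := eb 1 + eb (-1).

Definition Jvec : V :=
  (4 * k ^ 2)%:R^-1 *: alpha (-1) (alpha (-1) (alpha (-1) (alpha (-1) vac)))
  - (k%:R)^-1 *: alpha (-3) (alpha (-1) vac)
  + (3%:R / (4 * k)%:R) *: alpha (-2) (alpha (-2) vac).

Definition betak : C :=
  ((64 * k ^ 2)%:R - (16 * k)%:R - 18%:R) / (((4 * k)%:R - 1) * ((4 * k)%:R - 9%:R)).

End LatticeVOA.

(* Main.v *)
From HB Require Import structures.
Require Import Defs.
From mathcomp Require Import all_boot all_order all_algebra.
From mathcomp Require Import finmap multiset.
From mathcomp.multinomials Require Import monalg.
From mathcomp Require Import ring.
Import GRing.Theory Num.Theory.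
Local Open Scope ring_scope.

Section Lext.
Variable C : numClosedFieldType.
Implicit Types (f g : key -> V C) (v w : V C).

Lemma lext_w f v (d : {fset key}) : (msupp v `<=` d)%fset ->
  lext f v = \sum_(x <- d) v@_x *: f x.
Proof.
move=> le; rewrite /lext (big_fset_incl _ le) //.
by move=> x _ /mcoeff_outdom ->; rewrite scale0r.
Qed.

Lemma lextD f v w : lext f (v + w) = lext f v + lext f w.
Proof.
have h1 := msuppD_le v w.
rewrite (lext_w f _ _ h1) (lext_w f _ _ (fsubsetUl (msupp v) (msupp w))).
rewrite (lext_w f _ _ (fsubsetUr (msupp v) (msupp w))) -big_split /=.
by apply: eq_bigr => x _; rewrite mcoeffD scalerDl.
Qed.

Lemma lextZ f c v : lext f (c *: v) = c *: lext f v.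
Proof.
rewrite (lext_w f _ _ (msuppZ_le c v)) /lext scaler_sumr.
by apply: eq_bigr => x _; rewrite mcoeffZ scalerA.
Qed.

Lemma lextU f c x : lext f << c *g x >> = c *: f x.
Proof. by rewrite (lext_w f _ _ msuppU_le) big_seq_fset1 mcoeffUU. Qed.

Lemma lext0 f : lext f 0 = 0.
Proof. by rewrite /lext msupp0 big_seq_fset0. Qed.

Lemma lextN f v : lext f (- v) = - lext f v.
Proof. by rewrite -scaleN1r lextZ scaleN1r. Qed.

Lemma lextB f v w : lext f (v - w) = lext f v - lext f w.
Proof. by rewrite lextD lextN. Qed.

Lemma lext_sum f (I : Type) (r : seq I) (F : I -> V C) :
  lext f (\sum_(i <- r) F i) = \sum_(i <- r) lext f (F i).
Proof.
elim: r => [|a r IH]; first by rewrite !big_nil lext0.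
by rewrite !big_cons lextD IH.
Qed.

Lemma lext_ext f g v : f =1 g -> lext f v = lext g v.
Proof. by move=> e; apply: eq_bigr => x _; rewrite e. Qed.

Lemma lext_ext0 f v : (forall x, f x = 0) -> lext f v = 0.
Proof. by move=> e; rewrite /lext big1 // => x _; rewrite e scaler0. Qed.
End Lext.
Definition spoly := seq rat.
Definition skey := (int * seq nat)%type.
Definition svec := seq (spoly * skey).

Fixpoint padd (p q : spoly) : spoly :=
  match p with
  | [::] => q
  | a :: p' => match q with [::] => p | b :: q' => (a + b) :: padd p' q' end
  end.
Definition pscal (a : rat) (p : spoly) : spoly := map (fun c => a * c) p.
Definition pmul (p q : spoly) : spoly :=
  foldr (fun a acc => padd (pscal a q) (0 :: acc)) [::] p.
Fixpoint ptrim (p : spoly) : spoly :=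
  match p with
  | [::] => [::]
  | a :: p' => let r := ptrim p' in if (r == [::]) && (a == 0) then [::] else a :: r
  end.

Definition focks (s : seq nat) : nat := sumn (map S s).

Definition sscale (p : spoly) (v : svec) : svec := map (fun t => (pmul p t.1, t.2)) v.
Definition slext (f : skey -> svec) (v : svec) : svec :=
  flatten (map (fun t => sscale t.1 (f t.2)) v).

Definition hb_s (n : int) (x : skey) : svec :=
  match n with
  | Posz 0 => [:: ([:: 0; (2 * x.1)%:~R], x)]
  | Posz p.+1 => [:: ([:: 0; (2 * p.+1 * count_mem p x.2)%N%:R], (x.1, rem p x.2))]
  | Negz p => [:: ([:: 1], (x.1, p :: x.2))]
  end.
Definition alpha_s (n : int) (v : svec) : svec := slext (hb_s n) v.

Fixpoint Sall (b : int) (s : nat) (v : svec) : seq svec :=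
  match s with
  | 0%N => [:: v]
  | s'.+1 => let L := Sall b s' v in
     rcons L (sscale [:: (s'.+1%:R)^-1]
       (flatten [seq sscale [:: b%:~R] (alpha_s (Negz n) (nth [::] L (s' - n)))
                 | n <- iota 0 s'.+1]))
  end.
Definition Sop_s b s v := nth [::] (Sall b s v) s.

Fixpoint Tall (b : int) (p : nat) (v : svec) : seq svec :=
  match p with
  | 0%N => [:: v]
  | p'.+1 => let L := Tall b p' v in
     rcons L (sscale [:: (p'.+1%:R)^-1]
       (flatten [seq sscale [:: (- b)%:~R] (alpha_s (Posz n.+1) (nth [::] L (p' - n)))
                 | n <- iota 0 p'.+1]))
  end.
Definition Top_s b p v := nth [::] (Tall b p v) p.

Definition emode_s (b q : int) (y : skey) : svec :=
  flatten [seq (let s := (p%:Z - q - 1)%R in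
               if (0 <= s)%R then Sop_s b (absz s) (Top_s b p [:: ([:: 1], (b + y.1, y.2))])
               else [::]) | p <- iota 0 (focks y.2).+1].

Fixpoint lmode_s (b : int) (l : seq nat) (q : int) (y : skey) : svec :=
  match l with
  | [::] => emode_s b q y
  | i :: l' =>
    let n := i.+1 in
    let X := ((focks l' + focks y.2)%N%:Z - q)%R in
    let N := if (0 <= X)%R then absz X else 0%N in
    flatten [seq sscale [:: ('C(n + j - 1, j))%:R]
                  (alpha_s (- (n + j)%:Z) (lmode_s b l' (q + j%:Z) y)) | j <- iota 0 N]
    ++ sscale [:: - ((-1) ^+ n)]
       (flatten [seq sscale [:: ('C(n + j - 1, j))%:R]
                  (slext (lmode_s b l' (q - n%:Z - j%:Z)) (hb_s j y)) | j <- iota 0 (focks y.2).+1])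
  end.

Definition mode_s (v : svec) (q : int) (u : svec) : svec :=
  slext (fun x => slext (lmode_s x.1 x.2 q) u) v.

Fixpoint sinsert (t : spoly * skey) (acc : svec) : svec :=
  match acc with
  | [::] => [:: t]
  | t' :: acc' => if t'.2 == t.2 then (padd t'.1 t.1, t.2) :: acc' else t' :: sinsert t acc'
  end.
Definition nkey (x : skey) : skey := (x.1, sort leq x.2).
Definition snorm (v : svec) : svec :=
  filter (fun t => t.1 != [::]) (map (fun t => (ptrim t.1, t.2))
     (foldr sinsert [::] (map (fun t => (t.1, nkey t.2)) v))).
Definition sminus (v w : svec) : svec := v ++ sscale [:: -1] w.
Definition seqv (v w : svec) : bool := snorm (sminus v w) == [::].

Definition permok (x y : skey) (q : int) : bool :=
  all (fun l => seqv (lmode_s x.1 l q y) (lmode_s x.1 x.2 q y)) (permutations x.2).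
Definition modeok (v : svec) (q : int) (u : svec) : bool :=
  all (fun t => all (fun t' => (t.2.1 * t'.2.1 == 0) && permok t.2 t'.2 q) u) v.

Definition theta_s (v : svec) : svec :=
  map (fun t => (if odd (size t.2.2) then pscal (-1) t.1 else t.1, (- t.2.1, t.2.2))) v.
Definition vplusok (v : svec) : bool := seqv (theta_s v) v.

Definition vac_s : svec := [:: ([:: 1], (0, [::]))].
Definition E_s : svec := [:: ([:: 1], (1, [::])); ([:: 1], (-1, [::]))].

Section Interp.
Variable C : numClosedFieldType.
Variable k : nat.
Local Notation kC := (k%:R : C).

Definition peval (p : spoly) : C := foldr (fun c acc => ratr c + kC * acc) 0 p.

Lemma peval_add p q : peval (padd p q) = peval p + peval q.
Proof.
elim: p q => [|a p IH] [|b q] /=; rewrite ?add0r ?addr0 //.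
by rewrite IH rmorphD /=; ring.
Qed.

Lemma peval_scal a p : peval (pscal a p) = ratr a * peval p.
Proof. by elim: p => [|b p IH] /=; rewrite ?mulr0 // IH rmorphM /=; ring. Qed.

Lemma peval_mul p q : peval (pmul p q) = peval p * peval q.
Proof.
elim: p => [|a p IH] /=; first by rewrite mul0r.
by rewrite peval_add peval_scal /= IH rmorph0 /=; ring.
Qed.

Lemma peval_trim p : peval (ptrim p) = peval p.
Proof.
elim: p => [|a p IH] //=.
case: ifP => [/andP[/eqP e /eqP ->]|_] /=; last by rewrite IH.
by rewrite -IH e /= rmorph0 mulr0 addr0.
Qed.

Definition ikey (x : skey) : key := (x.1, seq_mset x.2).
Definition interp (v : svec) : V C := \sum_(t <- v) peval t.1 *: << ikey t.2 >>.

Lemma interp_nil : interp [::] = 0.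
Proof. by rewrite /interp big_nil. Qed.

Lemma interp_cons t v : interp (t :: v) = peval t.1 *: << ikey t.2 >> + interp v.
Proof. by rewrite /interp big_cons. Qed.

Lemma interp_cat v w : interp (v ++ w) = interp v + interp w.
Proof. by rewrite /interp big_cat. Qed.

Lemma interp_sscale p v : interp (sscale p v) = peval p *: interp v.
Proof.
rewrite /interp big_map scaler_sumr; apply: eq_bigr => t _.
by rewrite peval_mul scalerA.
Qed.

Lemma interp_flatten (I : Type) (r : seq I) (F : I -> svec) :
  interp (flatten (map F r)) = \sum_(i <- r) interp (F i).
Proof.
elim: r => [|a r IH] /=; first by rewrite big_nil interp_nil.
by rewrite interp_cat IH big_cons.
Qed.

Lemma lext_interp (F : key -> V C) v :
  lext F (interp v) = \sum_(t <- v) peval t.1 *: F (ikey t.2).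
Proof.
rewrite /interp lext_sum; apply: eq_bigr => t _.
by rewrite lextZ lextU scale1r.
Qed.

Lemma interp_slext (f : skey -> svec) (F : key -> V C) v :
  (forall t, t \in v -> interp (f t.2) = F (ikey t.2)) ->
  interp (slext f v) = lext F (interp v).
Proof.
move=> h; rewrite /slext interp_flatten lext_interp big_seq [RHS]big_seq.
by apply: eq_bigr => t tv; rewrite interp_sscale h.
Qed.

Lemma ratr0C : @ratr C 0 = 0.
Proof. exact: rmorph0. Qed.

Lemma peval1 : peval [:: 1] = 1.
Proof. by rewrite /= rmorph1 mulr0 addr0. Qed.

Lemma pevalc c : peval [:: c] = ratr c.
Proof. by rewrite /= mulr0 addr0. Qed.

End Interp.

Open Scope mset_scope.
Lemma seq_msetB (s : seq nat) p : msetB (seq_mset s) (msetn 1 p) = seq_mset (rem p s).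
Proof.
apply/msetP => a; rewrite msetB1E !mset_seqE count_rem /=.
case: (eqVneq a p) => [->|ne].
  by case: (boolP (p \in s)) => [|/count_memPn ->] //=.
by rewrite andbF.
Qed.

Lemma seq_msetD1 (s : seq nat) p : msetD (msetn 1 p) (seq_mset s) = seq_mset (p :: s).
Proof. by apply/msetP => a; rewrite mset1DE !mset_seqE /= [p == a]eq_sym. Qed.

Lemma seq_mset0 : seq_mset [::] = (mset0 : {mset nat}).
Proof. by apply/msetP => a; rewrite mset_seqE mset0E. Qed.
Close Scope mset_scope.

Lemma fock_seq (l : seq nat) : (\sum_(i <- l) i.+1)%N = focks l.
Proof. by elim: l => [|a l IH]; rewrite ?big_nil ?big_cons ?IH. Qed.

Lemma fock_mset (s : seq nat) : (\sum_(i <- seq_mset s) i.+1)%N = focks s.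
Proof. by rewrite (perm_big _ (perm_eq_seq_mset s)) fock_seq. Qed.

Lemma focks_rem (s : seq nat) p : p \in s -> focks s = (p.+1 + focks (rem p s))%N.
Proof.
move=> ps; rewrite -!fock_seq (perm_big _ (perm_to_rem ps)) big_cons //.
Qed.

Section Correct.
Variable C : numClosedFieldType.
Variable k : nat.
Local Notation kC := (k%:R : C).
Local Notation interp := (@interp C k).
Local Notation peval := (@peval C k).
Local Notation ikey := ikey.

Lemma hb_ok n x : interp (hb_s n x) = hb C k n (ikey x).
Proof.
case: x => m s; rewrite /interp.
case: n => [[|p]|p] /=; rewrite big_cons big_nil addr0 /=.
- congr (_ *: _); rewrite rmorph0 add0r mulr0 addr0 ratr_int.
  by rewrite intrM natrM /=; ring.
- rewrite /ikey /= mset_seqE seq_msetB; congr (_ *: _).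
  by rewrite rmorph0 add0r mulr0 addr0 ratr_nat !natrM; ring.
- by rewrite /ikey /= seq_msetD1 rmorph1 mulr0 addr0 scale1r.
Qed.

Lemma alpha_ok n v : interp (alpha_s n v) = alpha k n (interp v).
Proof. by apply: interp_slext => t _; rewrite hb_ok. Qed.

End Correct.

Section Correct2.
Variable C : numClosedFieldType.
Variable k : nat.
Local Notation kC := (k%:R : C).
Local Notation interp := (@interp C k).
Local Notation peval := (@peval C k).

Lemma size_Sall b s v : size (Sall b s v) = s.+1.
Proof. by elim: s => //= s IH; rewrite size_rcons IH. Qed.
Lemma size_Sseq b s : size (@Sseq C k b s) = s.+1.
Proof. by elim: s => //= s IH; rewrite size_rcons IH. Qed.
Lemma size_Tall b s v : size (Tall b s v) = s.+1.
Proof. by elim: s => //= s IH; rewrite size_rcons IH. Qed.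
Lemma size_Tseq b s : size (@Tseq C k b s) = s.+1.
Proof. by elim: s => //= s IH; rewrite size_rcons IH. Qed.

Lemma sum_iota_ord (N : nat) (F : nat -> V C) :
  \sum_(n < N) F n = \sum_(n <- iota 0 N) F n.
Proof. by rewrite -(big_mkord xpredT) /index_iota subn0. Qed.

Lemma Sall_S b s v : Sall b s.+1 v = rcons (Sall b s v) (sscale [:: (s.+1%:R)^-1]
       (flatten [seq sscale [:: b%:~R] (alpha_s (Negz n) (nth [::] (Sall b s v) (s - n)))
                 | n <- iota 0 s.+1])).
Proof. by []. Qed.
Lemma Sseq_S b s : @Sseq C k b s.+1 = rcons (@Sseq C k b s) (fun v => (s.+1%:R)^-1 *:
        \sum_(n < s.+1) (b%:~R *: alpha k (Negz n) (nth id (@Sseq C k b s) (s - n) v))).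
Proof. by []. Qed.
Lemma Tall_S b s v : Tall b s.+1 v = rcons (Tall b s v) (sscale [:: (s.+1%:R)^-1]
       (flatten [seq sscale [:: (- b)%:~R] (alpha_s (Posz n.+1) (nth [::] (Tall b s v) (s - n)))
                 | n <- iota 0 s.+1])).
Proof. by []. Qed.
Lemma Tseq_S b s : @Tseq C k b s.+1 = rcons (@Tseq C k b s) (fun v => (s.+1%:R)^-1 *:
        \sum_(n < s.+1) ((- b)%:~R *: alpha k (Posz n.+1) (nth id (@Tseq C k b s) (s - n) v))).
Proof. by []. Qed.

Lemma Sall_ok b s v i : (i <= s)%N ->
  interp (nth [::] (Sall b s v) i) = nth id (@Sseq C k b s) i (interp v).
Proof.
elim: s i => [|s IH] i.
  by rewrite leqn0 => /eqP ->.
rewrite Sall_S Sseq_S !nth_rcons size_Sall size_Sseq.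
rewrite leq_eqVlt => /orP[/eqP ->|lt]; last by rewrite lt IH.
rewrite ltnn eqxx.
rewrite interp_sscale pevalc fmorphV rmorph_nat interp_flatten -sum_iota_ord.
congr (_ *: _); apply: eq_bigr => n _.
by rewrite interp_sscale pevalc rmorph_int alpha_ok IH // leq_subr.
Qed.

Lemma Sop_ok b s v : interp (Sop_s b s v) = Sop k b s (interp v).
Proof. exact: Sall_ok. Qed.

Lemma Tall_ok b s v i : (i <= s)%N ->
  interp (nth [::] (Tall b s v) i) = nth id (@Tseq C k b s) i (interp v).
Proof.
elim: s i => [|s IH] i.
  by rewrite leqn0 => /eqP ->.
rewrite Tall_S Tseq_S !nth_rcons size_Tall size_Tseq.
rewrite leq_eqVlt => /orP[/eqP ->|lt]; last by rewrite lt IH.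
rewrite ltnn eqxx.
rewrite interp_sscale pevalc fmorphV rmorph_nat interp_flatten -sum_iota_ord.
congr (_ *: _); apply: eq_bigr => n _.
by rewrite interp_sscale pevalc rmorph_int alpha_ok IH // leq_subr.
Qed.

Lemma Top_ok b s v : interp (Top_s b s v) = Top k b s (interp v).
Proof. exact: Tall_ok. Qed.

Lemma interp1 x : interp [:: ([:: 1], x)] = << ikey x >>.
Proof. by rewrite interp_cons interp_nil addr0 peval1 scale1r. Qed.

Lemma emode_ok b q y : b * y.1 = 0 ->
  interp (emode_s b q y) = emode C k b q (ikey y).
Proof.
move=> hb0; rewrite /emode /emode_s; cbv zeta.
have -> : 2 * k%:Z * b * (ikey y).1 = 0 by rewrite -mulrA hb0 mulr0.
rewrite fock_mset interp_flatten -sum_iota_ord; apply: eq_bigr => p _.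
rewrite subr0; case: ifP => _; last by rewrite interp_nil.
by rewrite Sop_ok Top_ok interp1.
Qed.

End Correct2.

From mathcomp Require Import zify.

Section Correct3.
Variable C : numClosedFieldType.
Variable k : nat.
Local Notation kC := (k%:R : C).
Local Notation interp := (@interp C k).
Local Notation peval := (@peval C k).

Lemma alpha0 n : alpha k n (0 : V C) = 0.
Proof. by rewrite /alpha lext0. Qed.

Lemma lmode_cons b i l q y : lmode C k b (i :: l) q y =
  \sum_(j < absz (wtl k b l + wt k y - q)%R)
      ('C(i.+1 + j - 1, j))%:R *: alpha k (- (i.+1 + j)%:Z) (lmode C k b l (q + j%:Z) y)
  - (-1) ^+ i.+1 *: \sum_(j < (\sum_(t <- y.2) t.+1).+1)
      ('C(i.+1 + j - 1, j))%:R *: lext (lmode C k b l (q - i.+1%:Z - j%:Z)) (hb C k j y).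
Proof. by []. Qed.

Lemma lmode_van b l : forall q y, b * y.1 = 0 ->
  ((focks l + focks y.2)%N%:Z <= q) -> lmode C k b l q (ikey y) = 0.
Proof.
elim: l => [|i l IH] q [m s] hb0 hq; simpl in hb0.
  rewrite /= /emode; cbv zeta.
  have -> : 2 * k%:Z * b * (ikey (m, s)).1 = 0 by rewrite -mulrA hb0 mulr0.
  rewrite fock_mset; apply: big1 => p _; rewrite ifF //.
  have hp := ltn_ord p; simpl in hp, hq |- *.
  lia.
have hq' : ((i.+1 + focks l + focks s)%N%:Z <= q) by move: hq; rewrite /=.
rewrite lmode_cons.
rewrite big1 => [|j _]; last first.
  by rewrite IH ?alpha0 ?scaler0 //; simpl; lia.
rewrite big1 ?scaler0 ?subr0 // => j _.
rewrite -hb_ok lext_interp.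
case: j => [[|p] hp] /=.
  by rewrite big_cons big_nil addr0 IH ?scaler0 //; simpl; lia.
rewrite big_cons big_nil addr0.
case: (boolP (p \in s)) => [py|/count_memPn ->].
  rewrite IH ?scaler0 //; move: hq'; rewrite (focks_rem _ _ py) /=; simpl; lia.
by rewrite muln0 /= ratr0C !(mulr0, addr0) scale0r scaler0.
Qed.

End Correct3.

Section Correct4.
Variable C : numClosedFieldType.
Variable k : nat.
Local Notation kC := (k%:R : C).
Local Notation interp := (@interp C k).
Local Notation peval := (@peval C k).

Lemma lmode_cons_iota b i l q y : lmode C k b (i :: l) q y =
  \sum_(j <- iota 0 (absz (wtl k b l + wt k y - q)%R))
      ('C(i.+1 + j - 1, j))%:R *: alpha k (- (i.+1 + j)%:Z) (lmode C k b l (q + j%:Z) y)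
  - (-1) ^+ i.+1 *: \sum_(j <- iota 0 (\sum_(t <- y.2) t.+1).+1)
      ('C(i.+1 + j - 1, j))%:R *: lext (lmode C k b l (q - i.+1%:Z - j%:Z)) (hb C k j y).
Proof.
rewrite lmode_cons.
rewrite (sum_iota_ord _ _ (fun j => ('C(i.+1 + j - 1, j))%:R *: alpha k (- (i.+1 + j)%:Z) (lmode C k b l (q + j%:Z) y))).
by rewrite (sum_iota_ord _ _ (fun j => ('C(i.+1 + j - 1, j))%:R *: lext (lmode C k b l (q - i.+1%:Z - j%:Z)) (hb C k j y))).
Qed.

Lemma lmode_s_cons b i l q y : lmode_s b (i :: l) q y =
  flatten [seq sscale [:: ('C(i.+1 + j - 1, j))%:R]
      (alpha_s (- (i.+1 + j)%:Z) (lmode_s b l (q + j%:Z) y))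
    | j <- iota 0 (if (0 <= ((focks l + focks y.2)%N%:Z - q))%R
                   then absz ((focks l + focks y.2)%N%:Z - q) else 0%N)]
  ++ sscale [:: - ((-1) ^+ i.+1)]
     (flatten [seq sscale [:: ('C(i.+1 + j - 1, j))%:R]
        (slext (lmode_s b l (q - i.+1%:Z - j%:Z)) (hb_s j y)) | j <- iota 0 (focks y.2).+1]).
Proof. by []. Qed.

Lemma hb_s_mom n x t : t \in hb_s n x -> t.2.1 = x.1.
Proof. by case: n => [[|p]|p]; rewrite inE => /eqP ->. Qed.

Lemma lmode_ok b l : forall q y, b * y.1 = 0 ->
  interp (lmode_s b l q y) = lmode C k b l q (ikey y).
Proof.
elim: l => [|i l IH] q [m s] hb0; simpl in hb0.
  exact: emode_ok.
rewrite lmode_cons_iota lmode_s_cons interp_cat interp_sscale !interp_flatten pevalc.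
rewrite rmorphN rmorphXn rmorphN1 scaleNr.
congr (_ - _ *: _); last first.
  rewrite fock_mset; apply: eq_bigr => j _.
  rewrite interp_sscale pevalc rmorph_nat; congr (_ *: _).
  rewrite -hb_ok; apply: interp_slext => t ht.
  case: t ht => c [m' s'] ht; have /= hm := hb_s_mom _ _ _ ht.
  by rewrite IH //= hm.
rewrite /wt /wtl /= fock_seq fock_mset.
set X := ((focks l + focks s)%N%:Z - q)%R.
set N' := if 0 <= X then absz X else 0%N.
set N := absz _.
have hNN : (N' <= N)%N.
  have h1 : 0 <= k%:Z * b * b by rewrite -mulrA mulr_ge0 // sqr_ge0.
  have h2 : 0 <= k%:Z * m * m by rewrite -mulrA mulr_ge0 // sqr_ge0.
  rewrite /N' /N /X; case: ifP => // hX.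
  by rewrite -lez_nat !gez0_abs //; lia.
have tail : forall j, (N' <= j)%N -> lmode C k b l (q + j%:Z) (ikey (m, s)) = 0.
  move=> j hj; apply: lmode_van => //=.
  move: hj; rewrite /N' /X; case: ifP => hX hj; last by lia.
  by move: hj; rewrite -lez_nat gez0_abs //; lia.
rewrite -(subnKC hNN) iotaD big_cat /= add0n.
rewrite [X in _ = _ + X]big1_seq ?addr0 => [|j /andP[_]]; last first.
  by rewrite mem_iota => /andP[hj _]; rewrite tail ?alpha0 ?scaler0.
apply: eq_bigr => j _.
by rewrite interp_sscale pevalc rmorph_nat alpha_ok IH.
Qed.

End Correct4.
Section Correct5.
Variable C : numClosedFieldType.
Variable k : nat.
Local Notation interp := (@interp C k).
Local Notation peval := (@peval C k).

Lemma interp_cons2 c x v : interp ((c, x) :: v) = peval c *: << ikey x >> + interp v.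
Proof. exact: interp_cons. Qed.

Lemma interp_sinsert t acc : interp (sinsert t acc) = interp (t :: acc).
Proof.
case: t => c x.
elim: acc => [|[c' x'] acc IH] //.
rewrite [sinsert _ _]/=.
case: ifP => [/eqP e|_].
  rewrite e !interp_cons2 peval_add scalerDl.
  by rewrite -addrA [LHS]addrCA.
by rewrite !interp_cons2 IH interp_cons2 [LHS]addrCA.
Qed.

Lemma ikey_nkey x : ikey (nkey x) = ikey x.
Proof.
case: x => m s; rewrite /ikey /nkey; congr (_, _).
by apply/eq_seq_msetP; rewrite perm_sort.
Qed.

Lemma interp_filter (P : pred (spoly * skey)) v :
  (forall t, ~~ P t -> peval t.1 = 0) -> interp (filter P v) = interp v.
Proof.
move=> h; elim: v => [|[c x] v IH] //.
rewrite [filter _ _]/=; case: ifP => hP; first by rewrite !interp_cons2 IH.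
by rewrite interp_cons2 IH (h (c, x)) ?hP // scale0r add0r.
Qed.

Lemma snorm_ok v : interp (snorm v) = interp v.
Proof.
rewrite /snorm interp_filter => [|[c x]]; last first.
  by rewrite negbK => /eqP ->.
elim: v => [|[c x] v IH] //.
rewrite [map _ (_ :: _)]/= [foldr _ _ (_ :: _)]/=.
move: IH; set L := foldr _ _ _ => IH.
have h : forall L, interp [seq (ptrim t.1, t.2) | t <- L] = interp L.
  elim=> [|[c' x'] L' IH'] //.
  by rewrite [map _ (_ :: _)]/= !interp_cons2 IH' peval_trim.
rewrite h interp_sinsert interp_cons2 interp_cons2 -(h L) IH ikey_nkey.
by [].
Qed.

Lemma seqv_ok v w : seqv v w -> interp v = interp w.
Proof.
rewrite /seqv => /eqP h; have := snorm_ok (sminus v w).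
rewrite h interp_nil /sminus interp_cat interp_sscale pevalc rmorphN rmorph1.
by move/eqP; rewrite scaleN1r eq_sym subr_eq0 => /eqP.
Qed.

Lemma mode_ok v q u : modeok v q u -> interp (mode_s v q u) = mode k (interp v) q (interp u).
Proof.
move=> /allP hv; apply: interp_slext => -[c [m s]] hx.
have /allP hu := hv _ hx.
apply: interp_slext => -[d y] hy.
have /andP[/eqP h0 hp] := hu _ hy.
have e1 := lmode_ok C k m s q y h0.
have e2 := lmode_ok C k m (enum_mset (seq_mset s)) q y h0.
rewrite -e2; symmetry; apply: seqv_ok.
move/allP: hp; apply.
by rewrite mem_permutations perm_eq_seq_mset.
Qed.

End Correct5.

Section Correct7.
Variable C : numClosedFieldType.
Variable k : nat.
Local Notation interp := (@interp C k).
Local Notation peval := (@peval C k).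

Lemma theta_ok v : theta (interp v) = interp (theta_s v).
Proof.
rewrite /theta lext_interp /interp /theta_s big_map; apply: eq_bigr => -[c [m s]] _.
rewrite [(c, (m, s)).1]/= [(c, (m, s)).2]/=.
rewrite (perm_size (perm_eq_seq_mset s)) -signr_odd.
case: (odd (size s)); rewrite ?expr1 ?expr0.
  by rewrite peval_scal rmorphN1 scalerA mulrC.
by rewrite scale1r.
Qed.

Lemma vplus_ok v : vplusok v -> Vplus (interp v).
Proof. by move=> h; rewrite /Vplus theta_ok; apply: seqv_ok. Qed.

Lemma vac_ok : interp vac_s = vac C.
Proof.
by rewrite /vac_s interp_cons2 interp_nil addr0 peval1 scale1r /ikey seq_mset0.
Qed.

Lemma E_ok : interp E_s = Evec C.
Proof.
rewrite /E_s /interp big_cons big_seq1 peval1 !scale1r.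
by rewrite /ikey seq_mset0.
Qed.

Lemma lext_scalef (f : key -> V C) c v : lext (fun x => c *: f x) v = c *: lext f v.
Proof.
rewrite /lext scaler_sumr; apply: eq_bigr => x _.
by rewrite !scalerA mulrC.
Qed.

Lemma modeD1 (v w u : V C) q : mode k (v + w) q u = mode k v q u + mode k w q u.
Proof. exact: lextD. Qed.
Lemma modeB1 (v w u : V C) q : mode k (v - w) q u = mode k v q u - mode k w q u.
Proof. exact: lextB. Qed.
Lemma modeZ1 (c : C) (v u : V C) q : mode k (c *: v) q u = c *: mode k v q u.
Proof. exact: lextZ. Qed.
Lemma modeZ2 (c : C) (v u : V C) q : mode k v q (c *: u) = c *: mode k v q u.
Proof.
rewrite /mode -lext_scalef; apply: lext_ext => x.
exact: lextZ.
Qed.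

Lemma C2_4 (x : V C) (c1 c2 c3 c4 : C) (u1 u2 u3 u4 v1 v2 v3 v4 : V C) :
  Vplus u1 -> Vplus u2 -> Vplus u3 -> Vplus u4 ->
  Vplus v1 -> Vplus v2 -> Vplus v3 -> Vplus v4 ->
  x = c1 *: mode k v1 (-2) u1 + c2 *: mode k v2 (-2) u2 +
      c3 *: mode k v3 (-2) u3 + c4 *: mode k v4 (-2) u4 ->
  C2plus k x.
Proof.
move=> hu1 hu2 hu3 hu4 hv1 hv2 hv3 hv4 ->.
exists 4%N, (fun i => nth 0 [:: c1; c2; c3; c4] i),
  (fun i => nth 0 [:: u1; u2; u3; u4] i), (fun i => nth 0 [:: v1; v2; v3; v4] i).
split.
  move=> [[|[|[|[|i]]]] hi].
  - change (Vplus u1 /\ Vplus v1). split. exact hu1. exact hv1.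
  - change (Vplus u2 /\ Vplus v2); split; [exact hu2 | exact hv2].
  - change (Vplus u3 /\ Vplus v3); split; [exact hu3 | exact hv3].
  - change (Vplus u4 /\ Vplus v4); split; [exact hu4 | exact hv4].
  - (exfalso; move: hi; rewrite !ltnS ltn0; done).
rewrite [in RHS](big_ord_recl 3) [in RHS](big_ord_recl 2) [in RHS](big_ord_recl 1) [in RHS]big_ord1.
rewrite [in RHS]addrA [in RHS]addrA.
by [].
Qed.



End Correct7.

Lemma final_alg (R : fieldType) (M : lmodType R) (W1 W2 W3 W4 W5 W6 W7 W8 : M) (p1 p2 p3 p4 q1 q2 q3 q4 x1 x2 x3 bb D : R) :
  x1 = D^-1 * p1 -> - x2 = D^-1 * p2 -> x3 = D^-1 * p3 -> - bb = D^-1 * p4 ->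
  p1 *: W1 + (p2 *: W2 + (p3 *: W3 + (p4 *: W4 + (q1 *: W5 + (q2 *: W6 + (q3 *: W7 + q4 *: W8)))))) = 0 ->
  x1 *: W1 - x2 *: W2 + x3 *: W3 - bb *: W4 =
  (- (q1 / D)) *: W5 + (- (q2 / D)) *: W6 + (- (q3 / D)) *: W7 + (- (q4 / D)) *: W8.
Proof.
move=> h1 h2 h3 h4 H.
set P := p1 *: W1 + (p2 *: W2 + (p3 *: W3 + p4 *: W4)).
set Q := q1 *: W5 + (q2 *: W6 + (q3 *: W7 + q4 *: W8)).
have hPQ : P + Q = 0 by rewrite -H /P /Q !addrA.
have hQ : Q = - P by apply/eqP; rewrite -addr_eq0 addrC hPQ.
transitivity (D^-1 *: P).
  rewrite -!scaleNr h1 h2 h3 h4 /P !scalerDr !scalerA !addrA.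
  by [].
transitivity (- D^-1 *: Q).
  by rewrite hQ scalerN scaleNr opprK.
by rewrite /Q !scalerDr !scalerA !mulNr !(mulrC D^-1) !addrA.
Qed.


Definition P1 : spoly := map (fun z : int => z%:~R) [:: (36)%Z; (-160)%Z; (64)%Z].
Definition P2 : spoly := map (fun z : int => z%:~R) [:: (0)%Z; (-144)%Z; (640)%Z; (-256)%Z].
Definition P3 : spoly := map (fun z : int => z%:~R) [:: (0)%Z; (108)%Z; (-480)%Z; (192)%Z].
Definition P4 : spoly := map (fun z : int => z%:~R) [:: (18)%Z; (16)%Z; (-64)%Z].
Definition Q1 : spoly := map (fun z : int => z%:~R) [:: (-54)%Z; (144)%Z].
Definition Q2 : spoly := map (fun z : int => z%:~R) [:: (81)%Z; (-720)%Z; (1856)%Z; (-512)%Z].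
Definition Q3 : spoly := map (fun z : int => z%:~R) [:: (0)%Z; (-108)%Z; (1728)%Z; (-5760)%Z].
Definition Q4 : spoly := map (fun z : int => z%:~R) [:: (0)%Z; (-108)%Z; (-672)%Z; (3392)%Z; (-512)%Z].

Definition a4_s := alpha_s (-1) (alpha_s (-1) (alpha_s (-1) (alpha_s (-1) vac_s))).
Definition b31_s := alpha_s (-3) (alpha_s (-1) vac_s).
Definition b22_s := alpha_s (-2) (alpha_s (-2) vac_s).
Definition A2_s := alpha_s (-1) (alpha_s (-1) vac_s).
Definition v1_s : svec := [:: ([::1], (1, [:: 0; 0; 0]%N)); ([:: -1], (-1, [:: 0; 0; 0]%N))].
Definition u2_s : svec := [:: ([::1], (1, [:: 0]%N)); ([:: -1], (-1, [:: 0]%N))].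
Definition v3_s : svec := [:: ([::1], (1, [:: 2]%N)); ([:: -1], (-1, [:: 2]%N))].
Definition v4_s : svec := [:: ([::1], (0, [:: 0; 1]%N))].
Definition T1_s := mode_s a4_s (-1) E_s.
Definition T2_s := mode_s b31_s (-1) E_s.
Definition T3_s := mode_s b22_s (-1) E_s.
Definition T4i_s := mode_s A2_s (-1) E_s.
Definition T4_s := mode_s A2_s (-1) T4i_s.
Definition g1_s := mode_s v1_s (-2) vac_s.
Definition g2_s := mode_s A2_s (-2) u2_s.
Definition g3_s := mode_s v3_s (-2) vac_s.
Definition g4_s := mode_s v4_s (-2) E_s.
Definition rel_s : svec :=
  sscale P1 T1_s ++ (sscale P2 T2_s ++ (sscale P3 T3_s ++ (sscale P4 T4_s ++
  (sscale Q1 g1_s ++ (sscale Q2 g2_s ++ (sscale Q3 g3_s ++ sscale Q4 g4_s)))))).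

Lemma rel_ok : snorm rel_s = [::]. Proof. by vm_compute. Qed.
Lemma mok1 : modeok a4_s (-1) E_s. Proof. by vm_compute. Qed.
Lemma mok2 : modeok b31_s (-1) E_s. Proof. by vm_compute. Qed.
Lemma mok3 : modeok b22_s (-1) E_s. Proof. by vm_compute. Qed.
Lemma mok4i : modeok A2_s (-1) E_s. Proof. by vm_compute. Qed.
Lemma mok4 : modeok A2_s (-1) T4i_s. Proof. by vm_compute. Qed.
Lemma mokg1 : modeok v1_s (-2) vac_s. Proof. by vm_compute. Qed.
Lemma mokg2 : modeok A2_s (-2) u2_s. Proof. by vm_compute. Qed.
Lemma mokg3 : modeok v3_s (-2) vac_s. Proof. by vm_compute. Qed.
Lemma mokg4 : modeok v4_s (-2) E_s. Proof. by vm_compute. Qed.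
Lemma vpok_vac : vplusok vac_s. Proof. by vm_compute. Qed.
Lemma vpok_u2 : vplusok u2_s. Proof. by vm_compute. Qed.
Lemma vpok_E : vplusok E_s. Proof. by vm_compute. Qed.
Lemma vpok_v1 : vplusok v1_s. Proof. by vm_compute. Qed.
Lemma vpok_A2 : vplusok A2_s. Proof. by vm_compute. Qed.
Lemma vpok_v3 : vplusok v3_s. Proof. by vm_compute. Qed.
Lemma vpok_v4 : vplusok v4_s. Proof. by vm_compute. Qed.

Lemma interp_rel8 (C : numClosedFieldType) (k : nat) (p1 p2 p3 p4 p5 p6 p7 p8 : spoly)
  (X1 X2 X3 X4 X5 X6 X7 X8 : svec) :
  interp C k (sscale p1 X1 ++ (sscale p2 X2 ++ (sscale p3 X3 ++ (sscale p4 X4 ++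
  (sscale p5 X5 ++ (sscale p6 X6 ++ (sscale p7 X7 ++ sscale p8 X8))))))) =
  peval C k p1 *: interp C k X1 + (peval C k p2 *: interp C k X2 +
  (peval C k p3 *: interp C k X3 + (peval C k p4 *: interp C k X4 +
  (peval C k p5 *: interp C k X5 + (peval C k p6 *: interp C k X6 +
  (peval C k p7 *: interp C k X7 + peval C k p8 *: interp C k X8)))))).
Proof. by rewrite !interp_cat !interp_sscale. Qed.

Lemma peval_int (C : numClosedFieldType) (k : nat) (l : seq int) :
  peval C k (map (fun z : int => z%:~R) l) = foldr (fun z acc => z%:~R + (k%:R : C) * acc) 0 l.
Proof. by elim: l => [|z l IH] //=; rewrite IH ratr_int. Qed.

Global Opaque mode_s alpha_s sscale slext lmode_s emode_s.

Lemma ratrN' (C : numClosedFieldType) (x : rat) : ratr (- x) = - ratr x :> C.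
Proof. exact: rmorphN. Qed.
Lemma ratrn' (C : numClosedFieldType) (n : nat) : ratr (n%:R : rat) = n%:R :> C.
Proof. exact: ratr_nat. Qed.

Theorem corollary5p2 (C : numClosedFieldType) (k : nat) (hk : (3 <= k)%N) :
  @C2plus C k (@mode C k (@Jvec C k) (-1) (@Evec C)
               - @betak C k *: @Lm2 C k (@Lm2 C k (@Evec C))).
Proof.
pose I := interp C k.
have eJ : Jvec C k = (4 * k ^ 2)%:R^-1 *: I a4_s - (k%:R)^-1 *: I b31_s
                     + (3%:R / (4 * k)%:R) *: I b22_s.
  by rewrite /I /a4_s /b31_s /b22_s !(alpha_ok C k) (vac_ok C k).
have eL : Lm2 k (Lm2 k (Evec C)) = ((4 * k)%:R^-1 * (4 * k)%:R^-1) *: I T4_s.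
  rewrite /I /T4_s (mode_ok C k _ _ _ mok4) /T4i_s (mode_ok C k _ _ _ mok4i) /A2_s !(alpha_ok C k).
  rewrite (vac_ok C k) (E_ok C k) /Lm2 /omega.
  by rewrite !modeZ1 modeZ2 scalerA.
rewrite eJ eL -(E_ok C k) modeD1 modeB1 !modeZ1.
rewrite -(mode_ok C k _ _ _ mok1) -(mode_ok C k _ _ _ mok2) -(mode_ok C k _ _ _ mok3).
have k0 : (k%:R : C) != 0 by rewrite pnatr_eq0; apply/eqP; lia.
have h41 : 4 * (k%:R : C) - 1 != 0.
  by rewrite subr_eq0 -natrM pnatr_eq1; apply/eqP; lia.
have h49 : 4 * (k%:R : C) - 9 != 0.
  by rewrite subr_eq0 -natrM eqr_nat; apply/eqP; lia.
pose Dc : C := (16 * k ^ 2)%:R * ((4 * k)%:R - 1) * ((4 * k)%:R - 9%:R).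
apply: (@C2_4 C k _ (- (peval C k Q1 / Dc)) (- (peval C k Q2 / Dc)) (- (peval C k Q3 / Dc))
  (- (peval C k Q4 / Dc)) (interp C k vac_s) (interp C k u2_s) (interp C k vac_s) (interp C k E_s)
  (interp C k v1_s) (interp C k A2_s) (interp C k v3_s) (interp C k v4_s)).
- exact: (vplus_ok C k _ vpok_vac).
- exact: (vplus_ok C k _ vpok_u2).
- exact: (vplus_ok C k _ vpok_vac).
- exact: (vplus_ok C k _ vpok_E).
- exact: (vplus_ok C k _ vpok_v1).
- exact: (vplus_ok C k _ vpok_A2).
- exact: (vplus_ok C k _ vpok_v3).
- exact: (vplus_ok C k _ vpok_v4).
rewrite -(mode_ok C k _ _ _ mokg1) -(mode_ok C k _ _ _ mokg2) -(mode_ok C k _ _ _ mokg3).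
rewrite -(mode_ok C k _ _ _ mokg4).
rewrite [betak C k *: _]scalerA.
apply: (@final_alg _ _ _ _ _ _ _ _ _ _ (peval C k P1) (peval C k P2) (peval C k P3)
  (peval C k P4) _ _ _ _ _ _ _ _ Dc); last first.
  have h := snorm_ok C k rel_s.
  rewrite rel_ok interp_nil /rel_s interp_rel8 in h.
  exact: (esym h).
all: rewrite /Dc /P1 /P2 /P3 /P4 !peval_int /=.
rewrite /betak.
all: rewrite ?natrM ?natrX.
all: field.
all: by rewrite h49 h41 k0.
Qed.
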